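(* Let $H$ be a digraph (possibly with loops) and let $D$ be an $H$-colored $3$-quasi-transitive digraph. For every $k \geq 5$, $D$ has a $(k,H)$-kernel.
   Context: All digraphs are finite. A digraph $D$ is $3$-quasi-transitive if for all distinct $u,v\in V(D)$, whenever there is a directed $uv$-path of length $3$, $u$ and $v$ are joined by an arc (in some direction). $D$ has no loops and comes with a map $\rho: A(D)\to V(H)$. For a walk $W=(x_0,\ldots,x_n)$ in $D$, there is an obstruction on $x_i$ if $(\rho(x_{i-1},x_i),\rho(x_i,x_{i+1})) \notin A(H)$; for an open walk this is considered at internal vertices $x_i$, $1\le i\le n-1$, for a closed walk at all $i\in\{0,\ldots,n-1\}$ with indices modulo $n$. $O_H(W)$ is the set of indices with an obstruction; the $H$-length is $l_H(W)=|O_H(W)|+1$ for open $W$ and $|O_H(W)|$ for closed $W$. A $(k,H)$-kernel ($k\ge2$) is a set $S\subseteq V(D)$ such that for every two distinct $u,v\in S$ every directed $uv$-path in $D$ has $H$-length at least $k$, and for every $x\in V(D)\setminus S$ there is a directed path from $x$ to a vertex of $S$ of $H$-length at most $k-1$. *)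

(* Defs.v *)
From mathcomp Require Import all_boot.
Set Implicit Arguments. Unset Strict Implicit. Unset Printing Implicit Defensive.

Section HColored.
Variables (V C : finType) (E : rel V) (HA : rel C) (rho : V -> V -> C).

(* A directed uv-path: the vertex sequence u :: p, consecutive vertices joined
   by arcs of D, no repeated vertex, ending at v.  Its length is size p. *)
Definition dpath (u v : V) (p : seq V) : bool :=
  [&& path E u p, last u p == v & uniq (u :: p)].

Definition three_quasi_transitive : Prop :=
  forall u v (p : seq V), u != v -> dpath u v p -> size p = 3 -> E u v || E v u.

Fixpoint obstructions (s : seq V) : nat :=
  match s with
  | x :: ((y :: (z :: _)) as t) => (~~ HA (rho x y) (rho y z)) + obstructions t
  | _ => 0
  end.

Definition Hlength (s : seq V) : nat := obstructions s + 1.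

Definition kH_kernel (k : nat) (S : {set V}) : Prop :=
  (forall u v (p : seq V), u \in S -> v \in S -> u != v ->
      dpath u v p -> k <= Hlength (u :: p))
  /\ (forall x, x \notin S -> exists v (p : seq V),
      [/\ v \in S, dpath x v p & Hlength (x :: p) <= k - 1]).

End HColored.

(* Main.v *)
Require Import Defs.
From mathcomp Require Import all_boot zify.
From Stdlib Require Import Classical ClassicalEpsilon.
Set Implicit Arguments. Unset Strict Implicit. Unset Printing Implicit Defensive.

Section Pf.
Variables (V : finType) (E : rel V).
Hypothesis Eirr : irreflexive E.
Hypothesis E3 : three_quasi_transitive E.

Definition W n x y := exists q, [/\ path E x q, last x q = y & size q <= n].
Definition sw x y p := [/\ path E x p, last x p = y &
  forall q, path E x q -> last x q = y -> size p <= size q].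

Lemma W_cat m n x y z : W m x y -> W n y z -> W (m + n) x z.
Proof.
case=> [q1 [h1 l1 s1]] [q2 [h2 l2 s2]]; exists (q1 ++ q2); split.
- by rewrite cat_path h1 l1.
- by rewrite last_cat l1.
- by rewrite size_cat leq_add.
Qed.

Lemma W_arc x y : E x y -> W 1 x y.
Proof. by move=> e; exists [:: y]; split => //=; rewrite e. Qed.

Lemma W0 x : W 0 x x.
Proof. by exists [::]. Qed.

Lemma W_mono m n x y : m <= n -> W m x y -> W n x y.
Proof. by move=> mn [q [h l s]]; exists q; split => //; apply: leq_trans mn. Qed.

Lemma sw_le x y p n : sw x y p -> W n x y -> size p <= n.
Proof. by case=> _ _ m [q [h l s]]; apply: leq_trans (m q h l) s. Qed.

Lemma sw_neq x y p : sw x y p -> 0 < size p -> x != y.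
Proof.
move=> s lt; apply/eqP => exy; subst y.
by have := sw_le s (W0 x); rewrite leqn0 => /eqP e; rewrite e in lt.
Qed.

Lemma sw_exists x y : connect E x y -> exists p, sw x y p.
Proof.
move/connectP => [p hp ->].
suff: forall N p', path E x p' -> size p' <= N -> last x p' = last x p ->
   exists q, sw x (last x p) q by apply => //.
elim=> [|N IH] p' h s l.
  by exists p'; split => // q _ _; move: s; rewrite leqn0 => /eqP ->.
case: (classic (exists q, [/\ path E x q, size q <= N & last x q = last x p])).
  by case=> q [hq sq lq]; apply: (IH q).
move=> nex; exists p'; split => // q hq lq.
rewrite leqNgt; apply/negP => lt; apply: nex; exists q; split => //.
by rewrite -ltnS; apply: leq_trans lt s.
Qed.

Lemma sw_split x y p1 p2 : sw x y (p1 ++ p2) ->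
  sw x (last x p1) p1 /\ sw (last x p1) y p2.
Proof.
case; rewrite cat_path last_cat => /andP[h1 h2] l m; split; split => //.
- move=> q hq lq; have := m (q ++ p2); rewrite cat_path hq lq h2 last_cat lq.
  by rewrite !size_cat leq_add2r; apply.
- move=> q hq lq; have := m (p1 ++ q); rewrite cat_path h1 hq last_cat lq.
  by rewrite !size_cat leq_add2l; apply.
Qed.

Lemma qt4 a b c d : E a b -> E b c -> E c d -> a != c -> a != d -> b != d ->
  E a d || E d a.
Proof.
move=> ab bc cd ac ad bd.
have anb : a != b by apply/eqP => eab; rewrite eab Eirr in ab.
have bnc : b != c by apply/eqP => eab; rewrite eab Eirr in bc.
have cnd : c != d by apply/eqP => eab; rewrite eab Eirr in cd.
apply: (E3 (p := [:: b; c; d])) => //.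
by rewrite /dpath /= ab bc cd /= !inE !negb_or ac ad bd anb bnc cnd eqxx.
Qed.

End Pf.

Section Pf2.
Variables (V : finType) (E : rel V).
Hypothesis Eirr : irreflexive E.
Hypothesis E3 : three_quasi_transitive E.

Lemma sw_len3 x a b c : sw E x c [:: a; b; c] -> E c x.
Proof.
move=> s.
have [s1 _] := sw_split (p1 := [:: a; b]) s.
have [_ s2] := sw_split (p1 := [:: a]) s.
have [h _ _] := s; move: h => /= /and4P[xa ab bc _].
have := qt4 Eirr E3 xa ab bc (sw_neq s1 isT) (sw_neq s isT) (sw_neq s2 isT).
case/orP => // xc; have := sw_le s (W_arc xc); by [].
Qed.

Lemma backB n : forall x y p, sw E x y p -> size p = n -> odd n -> 3 <= n -> E y x.
Proof.
elim/ltn_ind: n => n IH x y p s sz od n3.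
have [n3e|n5] : n = 3 \/ 5 <= n.
  by move: od n3; clear; case: n => [|[|[|[|[|n]]]]] //= *; by [left|right].
- move: s sz; rewrite n3e; case: p => [|a [|b [|c [|? ?]]]] //= s _.
  have /= l : last x [:: a; b; c] = y by case: s.
  subst y; exact: sw_len3 s.
have := cat_take_drop (n - 3) p; set q := take (n - 3) p.
have szd : size (drop (n - 3) p) = 3 by rewrite size_drop sz; lia.
have szq : size q = n - 3 by rewrite size_take sz; case: ltnP => //; lia.
case: (drop (n - 3) p) szd => [|c [|d [|e [|? ?]]]] // _ ep.
rewrite -ep in s.
have [s0 s1] := sw_split s.
set u := last x q in s0 s1.
have eyu : E y u.
  have /= l : last u [:: c; d; e] = y by case: s1.
  subst y; exact: sw_len3 s1.
have s' : sw E x y ((q ++ [:: c]) ++ [:: d; e]) by rewrite -catA.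
have [s2 _] := sw_split s'.
rewrite last_cat /= in s2.
have ecx : E c x.
  apply: (IH (n - 2) _ x c (q ++ [:: c])) => //.
  - lia.
  - by rewrite size_cat szq /=; lia.
  - move: od n5; clear; case: n => [|[|n]] //= ; by rewrite subn2 /= negbK.
  - lia.
have [_ s3] := sw_split (p1 := [:: c]) s1.
have [h _ _] := s; move: h; rewrite cat_path -/u /= => /andP[_ /and3P[euc _ _]].
have yc : y != c by rewrite eq_sym (sw_neq s3 isT).
have yx : y != x by rewrite eq_sym; apply: (sw_neq s); rewrite ep sz; lia.
have ux : u != x by rewrite eq_sym; apply: (sw_neq s0); rewrite szq; lia.
have := qt4 Eirr E3 eyu euc ecx yc yx ux.
case/orP => // exy.
by have := sw_le s (W_arc exy); rewrite ep sz; lia.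
Qed.
End Pf2.

Section L2.
Variables (V : finType) (E : rel V).
Hypothesis Eirr : irreflexive E.
Hypothesis E3 : three_quasi_transitive E.

Lemma L2 a b c : W E 2 a b -> connect E a c -> ~ W E 4 c b -> W E 2 a c.
Proof.
move=> wab cac nw.
have [p s] := sw_exists cac.
case: (leqP (size p) 2) => [le2|gt2].
  by exists p; case: s => h l _; split.
exfalso; apply: nw.
case od: (odd (size p)).
  have eca := backB Eirr E3 s erefl od gt2.
  exact: W_mono _ (W_cat (W_arc eca) wab).
have [n4|n6]: size p = 4 \/ 6 <= size p.
  by move: od gt2; clear; case: (size p) => [|[|[|[|[|[|n]]]]]] //= *; by [left|right].
- clear od gt2; case: p s n4 => [|p1 [|p2 [|p3 [|p4 [|? ?]]]]] //= s _.
  have /= l : last a [:: p1; p2; p3; p4] = c by case: s.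
  subst c.
  have [s1 _] := sw_split (p1 := [:: p1; p2; p3]) s.
  have e3a := sw_len3 Eirr E3 s1.
  have [_ s2] := sw_split (p1 := [:: p1]) s.
  have e41 := sw_len3 Eirr E3 s2.
  have [h _ _] := s; move: h => /= /and5P[ea1 e12 e23 e34 _].
  have nw k : W E k a p4 -> 4 <= k by move/(sw_le s).
  case: wab => [[|w q] [hq lq sq]].
    rewrite /= in lq; subst b.
    exact: W_cat (W_cat (W_arc e41) (W_arc e12)) (W_cat (W_arc e23) (W_arc e3a)).
  move: hq => /= /andP[eaw hq].
  have wb : W E 1 w b by exists q; split.
  have wa : w != a by apply/eqP => ewa; rewrite ewa Eirr in eaw.
  have w2 : w != p2.
    apply/eqP => ew; subst w.
    by have := nw _ (W_cat (W_arc eaw) (W_cat (W_arc e23) (W_arc e34))).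
  have w3 : w != p3.
    apply/eqP => ew; subst w.
    by have := nw _ (W_cat (W_arc eaw) (W_arc e34)).
  have w4 : w != p4.
    apply/eqP => ew; subst w.
    by have := nw _ (W_arc eaw).
  have [s3 _] := sw_split (p1 := [:: p1; p2]) s.
  have p2a : p2 != a by rewrite eq_sym (sw_neq s3 isT).
  have [_ s4] := sw_split (p1 := [:: p1; p2]) s.
  have p24 : p2 != p4 by apply: (sw_neq s4 isT).
  have w2' : p2 != w by rewrite eq_sym.
  have w3' : p3 != w by rewrite eq_sym.
  have := qt4 Eirr E3 e23 e3a eaw p2a w2' w3'.
  case/orP => [e2w|ew2].
    apply: W_mono _ (W_cat (W_cat (W_arc e41) (W_arc e12)) (W_cat (W_arc e2w) wb)) => //.
  have := qt4 Eirr E3 ew2 e23 e34 w3 w4 p24.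
  case/orP => [ew4|e4w].
    by have := nw _ (W_cat (W_arc eaw) (W_arc ew4)).
  exact: W_mono _ (W_cat (W_arc e4w) wb).
- have := cat_take_drop 3 p; set q := take 3 p.
  have szq : size q = 3 by rewrite size_take; case: ltnP => //; lia.
  set r := drop 3 p.
  have szr : size r = size p - 3 by rewrite size_drop.
  case: q szq => [|a1 [|a2 [|a3 [|? ?]]]] // _ ep.
  rewrite -ep in s.
  have [s1 s2] := sw_split s.
  have e3a := sw_len3 Eirr E3 s1.
  have ec3 := backB Eirr E3 s2 erefl.
  rewrite szr in ec3.
  have {}ec3 : E c a3.
    apply: ec3; last lia.
    by move: od n6; clear; case: (size p) => [|[|[|[|n]]]] //=; rewrite !negbK => ->.
  exact: W_cat (W_cat (W_arc ec3) (W_arc e3a)) wab.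
Qed.
End L2.

Lemma shorten_size (T : eqType) (x : T) p : size (shorten x p) <= size p.
Proof.
elim: p x => [|y p IH] x //=; case: ifP => _ /=.
  exact: leq_trans (IH x) (leqnSn _).
by rewrite ltnS.
Qed.

Section Main.
Variables (V C : finType) (E : rel V) (HA : rel C) (rho : V -> V -> C) (k : nat).
Hypothesis Eirr : irreflexive E.
Hypothesis E3 : three_quasi_transitive E.
Hypothesis k5 : 5 <= k.

Definition Cr x y : Prop :=
  x != y /\ exists p, dpath E x y p /\ Hlength HA rho (x :: p) <= k - 1.
Definition Cb x y : bool := if excluded_middle_informative (Cr x y) then true else false.
Lemma CbP x y : reflect (Cr x y) (Cb x y).
Proof. by rewrite /Cb; case: excluded_middle_informative => h; constructor. Qed.
Definition Rb x y := Cb x y && ~~ Cb y x.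

Lemma obs_le s : obstructions HA rho s <= (size s).-2.
Proof.
elim: s => [|x s IH] //; case: s IH => [|y [|z t]] // IH.
have -> : obstructions HA rho [:: x, y, z & t] =
   (~~ HA (rho x y) (rho y z)) + obstructions HA rho [:: y, z & t] by [].
move: IH; rewrite /= => IH.
by apply: leq_trans (leq_add (leq_b1 _) IH) _.
Qed.

Lemma H_small x p : size p <= 4 -> Hlength HA rho (x :: p) <= k - 1.
Proof.
move=> sp; have := obs_le (x :: p); rewrite /Hlength /=; lia.
Qed.

Lemma W_conn n x y : W E n x y -> connect E x y.
Proof. by case=> q [h l _]; apply/connectP; exists q. Qed.

Lemma R_conn x y : Rb x y -> connect E x y.
Proof.
case/andP => /CbP [_ [p [/and3P [h /eqP l _] _]]] _.
by apply/connectP; exists p.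
Qed.

Lemma R_far x y : Rb x y -> ~ W E 4 y x.
Proof.
case/andP => /CbP [xy _] nyx [q [h l sq]].
have dp : dpath E y (last y q) (shorten y q).
  by case: (shortenP h) => p' h' u' _; rewrite /dpath h' u' eqxx.
rewrite l in dp.
move/negP: nyx; apply; apply/CbP; split; first by rewrite eq_sym.
exists (shorten y q); split => //.
by apply: H_small; apply: leq_trans (shorten_size _ _) sq.
Qed.

Lemma chain x s : path Rb x s -> W E 2 x (last x s).
Proof.
elim/last_ind: s => [|s y IH]; first by move=> _; exists [::].
rewrite rcons_path last_rcons => /andP[h r].
apply: (L2 Eirr E3 (IH h)); last exact: R_far r.
exact: connect_trans (W_conn (IH h)) (R_conn r).
Qed.

Lemma Rplus_irr x z : Rb x z -> connect Rb z x -> False.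
Proof.
move=> rxz /connectP [p hp ex].
have hp' : path Rb x (z :: p) by rewrite /= rxz.
move: hp'; rewrite lastI -ex rcons_path => /andP[h r].
apply: (R_far r); apply: W_mono _ (chain h) => //.
Qed.

Definition Rp x := [set z | [exists w, Rb x w && connect Rb w z]].

Lemma pick_sink (U : {set V}) x0 : x0 \in U ->
  exists2 x, x \in U & forall y, y \in U -> ~~ Rb x y.
Proof.
move=> x0U.
case: (arg_minnP (fun x => #|Rp x|) x0U) => x xU min.
exists x => // y yU; apply/negP => rxy.
have := min y yU; apply/negP; rewrite -ltnNge.
apply: proper_card; apply/properP; split.
  apply/subsetP => z; rewrite !inE => /existsP [w /andP[ryw cwz]].
  apply/existsP; exists y; rewrite rxy /=.
  exact: connect_trans (connect1 ryw) cwz.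
exists y; first by rewrite inE; apply/existsP; exists y; rewrite rxy connect0.
rewrite inE; apply/existsP => [[w /andP[ryw cwy]]].
exact: Rplus_irr ryw cwy.
Qed.

Lemma kernel_gen n (U : {set V}) : #|U| <= n -> exists S : {set V},
  [/\ S \subset U, forall u v, u \in S -> v \in S -> ~~ Cb u v &
      forall y, y \in U -> y \notin S -> exists2 v, v \in S & Cb y v].
Proof.
elim: n U => [|n IH] U cU.
  move: cU; rewrite leqn0 cards_eq0 => /eqP ->.
  by exists set0; split => [|u v|y]; rewrite ?sub0set ?inE.
case: (set_0Vmem U) => [->|[x0 x0U]].
  by exists set0; split => [|u v|y]; rewrite ?sub0set ?inE.
have [x xU xmin] := pick_sink x0U.
set U' := [set y in U | (y != x) && ~~ Cb y x].
have U'U : U' \subset U by apply/subsetP => y; rewrite inE => /andP[].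
have cU' : #|U'| <= n.
  rewrite -ltnS; apply: leq_trans cU; apply: proper_card; apply/properP.
  split => //; exists x => //; rewrite inE eqxx /= andbF.
  by [].
have [S' [S'U ind abs]] := IH U' cU'.
exists (x |: S'); split.
- by rewrite subUset sub1set xU (subset_trans S'U U'U).
- move=> u v; rewrite !in_setU1 => /orP[/eqP->|uS] /orP[/eqP->|vS].
  + by apply/negP => /CbP []; rewrite eqxx.
  + have := subsetP S'U v vS; rewrite inE => /and3P[vU _ nvx].
    apply/negP => cxv; have := xmin v vU; rewrite /Rb cxv nvx.
    by [].
  + by have := subsetP S'U u uS; rewrite inE => /and3P[].
  + exact: ind.
- move=> y yU; rewrite in_setU1 negb_or => /andP[yx yS].
  case cyx: (Cb y x); first by exists x => //; rewrite in_setU1 eqxx.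
  have yU' : y \in U' by rewrite inE yU yx cyx.
  have [v vS cyv] := abs y yU' yS.
  by exists v => //; rewrite in_setU1 vS orbT.
Qed.

End Main.

Unset Implicit Arguments.

Theorem theorem19 (V C : finType) (E : rel V) (HA : rel C) (rho : V -> V -> C) :
  irreflexive E ->
  three_quasi_transitive E ->
  forall k : nat, 5 <= k -> exists S : {set V}, kH_kernel E HA rho k S.
Proof.
move=> Eirr E3 k k5.
have [S [_ ind abs]] := kernel_gen HA rho Eirr E3 k5 (leqnn #|[set: V]|).
exists S; split.
- move=> u v p uS vS uv dp; rewrite leqNgt; apply/negP => lt.
  have := ind u v uS vS; apply/negP/negPn; apply/CbP; split => //.
  exists p; split => //; rewrite subn1 -ltnS prednK //; exact: leq_trans _ k5.
- move=> x xS; have [v vS /CbP [_ [p [dp hl]]]] := abs x (in_setT x) xS.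
  by exists v, p; split.
Qed.
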